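(* If $X$ is a locally compact Hausdorff space and $Y$ is an MG-space, then $X\times Y$ is an MG-space.
   Context: A space $X$ is Menger if for each sequence $(\mathcal{U}_n)$ of open covers of $X$ there is a sequence $(\mathcal{V}_n)$ with each $\mathcal{V}_n$ a finite subset of $\mathcal{U}_n$ and $\bigcup_{n}\bigcup\mathcal{V}_n=X$. A space $X$ is Menger generated (an MG-space) if a subset $U\subseteq X$ is open in $X$ whenever $U\cap M$ is open in $M$ for every Menger subspace $M$ of $X$. *)

(* Defs.v *)
From mathcomp Require Import all_boot all_order.
From mathcomp Require Import all_classical all_reals all_analysis.
Set Implicit Arguments. Unset Strict Implicit. Unset Printing Implicit Defensive.
Local Open Scope classical_set_scope.

Definition open_in {T : topologicalType} (M U : set T) : Prop :=
  exists V : set T, open V /\ U = V `&` M.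

Definition open_cover_of {T : topologicalType} (M : set T) (C : set (set T)) : Prop :=
  (forall U, C U -> open_in M U) /\ M `<=` \bigcup_(U in C) U.

Definition menger_subspace {T : topologicalType} (M : set T) : Prop :=
  forall Us : nat -> set (set T),
    (forall n, open_cover_of M (Us n)) ->
    exists Vs : nat -> set (set T),
      (forall n, finite_set (Vs n) /\ Vs n `<=` Us n) /\
      M `<=` \bigcup_n \bigcup_(U in Vs n) U.

Definition MG_space (T : topologicalType) : Prop :=
  forall U : set T,
    (forall M : set T, menger_subspace M -> open_in M (U `&` M)) -> open U.

(* Main.v *)
Require Import Defs.
From HB Require Import structures.
From mathcomp Require Import all_boot all_order.
From mathcomp Require Import all_classical all_reals all_analysis.
From mathcomp Require Import finmap.
Local Open Scope classical_set_scope.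

Definition pt_copy (X : Type) (x : X) : Type := X.
HB.instance Definition _ (X : topologicalType) (x : X) :=
  Topological.copy (pt_copy X x) X.
HB.instance Definition _ (X : topologicalType) (x : X) :=
  isPointed.Build (pt_copy X x) x.

Lemma compact_cover_np (X : topologicalType) (x : X) (C : set X) :
  compact C -> cover_compact C.
Proof.
move=> cC. have := @compact_cover (pt_copy X x).
move=> /(congr1 (fun f => f C)) /= E.
have : cover_compact (C : set (pt_copy X x)) by rewrite -E.
exact.
Qed.

Lemma nbhs_fin (Y : topologicalType) (y : Y) (X : eqType) (s : seq X)
  (B : X -> set Y) : (forall c, c \in s -> nbhs y (B c)) ->
  nbhs y (fun b => forall c, c \in s -> B c b).
Proof.
elim: s => [|a s IH] H.
  by apply: filterS (@filterT _ _ _); move=> b _ c; rewrite in_nil.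
have Ha : nbhs y (B a) by apply: H; exact: mem_head.
have Hs : nbhs y (fun b => forall c, c \in s -> B c b).
  by apply: IH => c cs; apply: H; rewrite in_cons cs orbT.
apply: filterS (filterI Ha Hs) => b [Ba Bs] c.
by rewrite in_cons => /orP [/eqP -> | cs]; [done | exact: Bs].
Qed.

Lemma tube (X Y : topologicalType) (C : set X) (y : Y) (I : Type) (D : set I)
  (f : I -> set (X * Y)) :
  compact C -> (forall i, D i -> open (f i)) ->
  (forall c, C c -> exists2 i, D i & f i (c, y)) ->
  exists2 F : set I, finite_set F /\ F `<=` D &
    exists2 B : set Y, open B /\ B y &
      forall c b, C c -> B b -> exists2 i, F i & f i (c, b).
Proof.
move=> cC fo cov.
case: (pselect (exists c, C c)) => [[c0 Cc0]|nC]; last first.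
  exists set0; first by split => //; exact: finite_set0.
  exists setT; first by split => //; exact: openT.
  by move=> c b Cc; exfalso; apply: nC; exists c.
have hc : forall c, exists p : I * set X * set Y, C c ->
    [/\ D p.1.1, nbhs c p.1.2, nbhs y p.2 & p.1.2 `*` p.2 `<=` f p.1.1].
  move=> c; case: (pselect (C c)) => Cc; last first.
    have [i0 _ _] := cov c0 Cc0; by exists (i0, setT, setT).
  have [i Di fi] := cov c Cc.
  have : nbhs (c, y) (f i) by apply: open_nbhs_nbhs; split => //; exact: fo.
  case=> [[P Q] /= [nP nQ] PQ].
  by exists (i, P, Q).
have [g hg] := choice hc.
have cc := @compact_cover_np X c0 C cC.
have [D' D'C cov'] := cc X C (fun c => ((g c).1.2)°) (fun c _ => open_interior _)
  (fun p Cp => ex_intro2 _ _ p Cp (let: And4 _ h _ _ := hg p Cp in h)).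
exists ((fun c => (g c).1.1) @` [set` D']).
  split; first by apply: finite_image; exact: finite_fset.
  move=> _ [c Dc <-]; have := D'C c Dc; rewrite in_setE => Cc.
  by case: (hg c Cc).
have nB : nbhs y (fun b => forall c, c \in (D' : seq X) -> (g c).2 b).
  apply: nbhs_fin => c Dc; have := D'C c Dc; rewrite in_setE => Cc.
  by case: (hg c Cc).
exists (fun b => forall c, c \in (D' : seq X) -> (g c).2 b)°.
  split; first exact: open_interior.
  exact: nbhs_singleton (nbhs_interior nB).
move=> c b Cc Bb.
have [c' Dc' Ac] := cov' c Cc.
have := D'C c' Dc'; rewrite in_setE => Cc'.
have [_ _ _ sub] := hg c' Cc'.
exists (g c').1.1; first by exists c'.
apply: sub; split => /=; first exact: interior_subset.
exact: (interior_subset Bb).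
Qed.

Lemma menger1 (T : topologicalType) (y : T) : menger_subspace [set y].
Proof.
move=> Us hUs.
have : forall n, exists U, Us n U /\ U y.
  move=> n; have [_ h] := hUs n; have [U ? ?] := h y erefl; by exists U.
move=> /choice [g hg].
exists (fun n => [set g n]); split.
  move=> n; split; first exact: finite_set1.
  by move=> U ->; case: (hg n).
move=> z ->; exists 0%N => //; exists (g 0%N) => //; by case: (hg 0%N).
Qed.

Lemma product_menger (X Y : topologicalType) (C : set X) (M : set Y) :
  compact C -> menger_subspace M -> menger_subspace (C `*` M).
Proof.
move=> cC mM Us hUs.
pose Ws n := [set N : set Y | open_in M N /\
   exists2 F : set (set (X * Y)), finite_set F /\ F `<=` Us n &
     forall c b, C c -> N b -> M b -> exists2 U, F U & U (c, b)].
have hWs : forall n, open_cover_of M (Ws n).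
  move=> n; split; first by move=> N [].
  move=> b Mb.
  have [hU1 hU2] := hUs n.
  pose D := [set V : set (X * Y) | open V /\ Us n (V `&` (C `*` M))].
  have [|F [fF FD] [B [oB Bb] hB]] := @tube X Y C b _ D id cC (fun V DV => DV.1).
    move=> c Cc.
    have [U UU Ucb] := hU2 (c, b) (conj Cc Mb).
    have [V [oV UV]] := hU1 U UU.
    exists V; first by split => //; rewrite -UV.
    by move: Ucb; rewrite UV => -[].
  exists (B `&` M) => //.
  split; first by exists B.
  exists ((fun V => V `&` (C `*` M)) @` F).
    split; first exact: finite_image.
    by move=> _ [V FV <-]; exact: (FD V FV).2.
  move=> c b' Cc [Bb' _] Mb'.
  have [V FV Vcb] := hB c b' Cc Bb'.
  by exists (V `&` (C `*` M)); [exists V | split].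
have [Vs' [hV1 hV2]] := mM Ws hWs.
have : forall nN : nat * set Y, exists F : set (set (X * Y)),
    Ws nN.1 nN.2 -> (finite_set F /\ F `<=` Us nN.1) /\
     forall c b, C c -> nN.2 b -> M b -> exists2 U, F U & U (c, b).
  move=> [n N]; case: (pselect (Ws n N)) => [[_ [F h1 h2]]|nW].
    by exists F.
  by exists set0.
move=> /choice [Fc hFc].
exists (fun n => \bigcup_(N in Vs' n) Fc (n, N)); split.
  move=> n; split.
    apply: bigcup_finite; first exact: (hV1 n).1.
    move=> N VN; exact: (hFc (n, N) ((hV1 n).2 N VN)).1.1.
  move=> U [N VN FU]; exact: (hFc (n, N) ((hV1 n).2 N VN)).1.2 _ FU.
move=> [c b] [/= Cc Mb].
have [n _ [N VN Nb]] := hV2 b Mb.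
have [U FU Ucb] := (hFc (n, N) ((hV1 n).2 N VN)).2 c b Cc Nb Mb.
exists n => //; exists U => //; by exists N.
Qed.

Arguments menger1 {T}.
Arguments product_menger {X Y C M}.

Theorem proposition4p22 (X Y : topologicalType) :
  hausdorff_space X -> locally_compact [set: X] -> MG_space Y ->
  MG_space (X * Y)%type.
Proof.
move=> hX lcX mgY U hU.
rewrite openE => -[x y] Uxy.
have [K nK [cK clK]] := lcX x I.
rewrite withinET in nK.
have reg := compact_regular hX cK nK.
have mK := product_menger cK (menger1 y).
have [V [oV UV]] := hU _ mK.
have Vxy : V (x, y).
  have : (U `&` (K `*` [set y])) (x, y).
    by split => //; split => //=; exact: nbhs_singleton nK.
  by rewrite UV => -[].
have : nbhs (x, y) V by apply: open_nbhs_nbhs.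
case=> [[A B] /= [nA nB] ABV].
have [P nP clP] := reg (A `&` K) (filterI nA nK).
pose Cs := closure P.
have cC : compact Cs.
  apply: (@subclosed_compact _ _ K); [exact: closed_closure | exact: cK | ].
  move=> z h; exact: (clP z h).2.
have CyU : forall c, Cs c -> U (c, y).
  move=> c Cc; have [Ac Kc] := clP c Cc.
  have : (V `&` (K `*` [set y])) (c, y).
    split; last by split.
    by apply: ABV; split => //=; exact: nbhs_singleton nB.
  by rewrite -UV => -[].
pose W := [set b | forall c, Cs c -> U (c, b)].
have oW : open W.
  apply: mgY => M mM.
  have [V' [oV' UV']] := hU _ (product_menger cC mM).
  exists (\bigcup_(B' in [set B' : set Y | open B' /\ B' `&` M `<=` W]) B').
  split; first by apply: bigcup_open => B' [].
  apply/seteqP; split.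
    move=> b [Wb Mb].
    have [|F _ [B' [oB' B'b] hB']] :=
      @tube X Y Cs b unit setT (fun _ => V') cC (fun _ _ => oV').
      move=> c Cc.
      have : (U `&` (Cs `*` M)) (c, b) by split; [exact: Wb | split].
      by rewrite UV' => -[] ? _; exists tt.
    split => //; exists B' => //; split => //.
    move=> b' [B'b' Mb'] c Cc.
    have [_ _ h] := hB' c b' Cc B'b'.
    have : (V' `&` (Cs `*` M)) (c, b') by split.
    by rewrite -UV' => -[].
  by move=> b [[B' [_ sub] B'b] Mb]; split => //; exact: sub.
have nW : nbhs y W by apply: open_nbhs_nbhs; split.
exists (P, W) => /=; first by split.
move=> [a b] /= [Pa Wb]; exact: Wb a (subset_closure Pa).
Qed.
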